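(* Let $d_1,d_2,\alpha,\beta>0$ be fixed, let $u_c=\tfrac12$, and for $\mu>0$ define $$k_c^2=\sqrt{\frac{\mu\beta}{d_1d_2}},\quad \chi_c=\frac{\mu d_2+\beta d_1+2\sqrt{d_1d_2\mu\beta}}{\alpha u_c(1-u_c)},\quad M=\frac{\beta+k_c^2d_2}{\alpha},\quad M^*=\frac{\alpha}{\mu+d_1k_c^2},$$ $$G(\mu)=\frac14\chi_cM^2k_c^2-4\mu M^3+\frac{2\mu^2M^3(\beta+4k_c^2d_2)}{\alpha\chi_ck_c^2-(\mu+4k_c^2d_1)(\beta+4k_c^2d_2)},\qquad L(\mu)=\frac{G(\mu)\,M^*}{1+MM^*}.$$ Then the cubic Stuart–Landau amplitude equation $\frac{dA}{dT_2}=\sigma A-L(\mu)A^3$ (with $\sigma>0$) is supercritical, i.e. $L(\mu)>0$, for all sufficiently small $\mu>0$, and subcritical, i.e. $L(\mu)<0$, for all sufficiently large $\mu$.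
   Context: This concerns the volume-filling chemotaxis system $u_t=(d_1u_x-\chi u(1-u)v_x)_x+\mu u(1-u/u_c)$, $v_t=d_2v_{xx}+\alpha u-\beta v$ near the uniform steady state $(u_c,\alpha u_c/\beta)$, where $\chi_c$ is the critical chemotactic coefficient and $k_c$ the critical wavenumber. In the weakly nonlinear expansion $\chi=\chi_c+\varepsilon^2\chi_2+\dots$, the amplitude $A$ of the leading-order pattern $\varepsilon A\,(M,1)^T\cos(k_cx)$ obeys $\frac{dA}{dT_2}=\sigma A-LA^3$ with $\sigma=\frac{k_c^2\chi_2u_c(1-u_c)M^*}{1+MM^*}>0$ and, for $u_c=\tfrac12$, the Landau coefficient $L$ given by the displayed formula. The equation is called supercritical if $L>0$ and subcritical if $L<0$. *)

(* Defs.v *)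
From Stdlib Require Import Reals.
Open Scope R_scope.

Definition uc : R := 1/2.

Definition kc2 (d1 d2 beta mu : R) : R := sqrt (mu * beta / (d1 * d2)).

Definition chic (d1 d2 alpha beta mu : R) : R :=
  (mu * d2 + beta * d1 + 2 * sqrt (d1 * d2 * mu * beta)) / (alpha * uc * (1 - uc)).

Definition Mc (d1 d2 alpha beta mu : R) : R :=
  (beta + kc2 d1 d2 beta mu * d2) / alpha.

Definition Mstar (d1 d2 alpha beta mu : R) : R :=
  alpha / (mu + d1 * kc2 d1 d2 beta mu).

Definition Gfun (d1 d2 alpha beta mu : R) : R :=
  let k2 := kc2 d1 d2 beta mu in
  let chi := chic d1 d2 alpha beta mu in
  let M := Mc d1 d2 alpha beta mu in
  1/4 * chi * M^2 * k2 - 4 * mu * M^3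
  + (2 * mu^2 * M^3 * (beta + 4 * k2 * d2))
    / (alpha * chi * k2 - (mu + 4 * k2 * d1) * (beta + 4 * k2 * d2)).

Definition Lfun (d1 d2 alpha beta mu : R) : R :=
  let M := Mc d1 d2 alpha beta mu in
  let Ms := Mstar d1 d2 alpha beta mu in
  Gfun d1 d2 alpha beta mu * Ms / (1 + M * Ms).

Definition supercritical (L : R) : Prop := L > 0.
Definition subcritical (L : R) : Prop := L < 0.

(* Main.v *)
Require Import Defs.
From Stdlib Require Import Reals Lra Psatz.
Open Scope R_scope.

Lemma G_eq (d1 d2 alpha beta mu : R) :
  0 < d1 -> 0 < d2 -> 0 < alpha -> 0 < beta -> 0 < mu ->
  Gfun d1 d2 alpha beta mu =
  (Mc d1 d2 alpha beta mu)^2 * kc2 d1 d2 beta mu * d1 * beta / alpha *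
  (1 - 20/9 * (d2 * kc2 d1 d2 beta mu / beta)
      - 37/9 * (d2 * kc2 d1 d2 beta mu / beta)^2
      - 8/9 * (d2 * kc2 d1 d2 beta mu / beta)^3).
Proof.
  intros h1 h2 ha hb hm.
  unfold Gfun, chic. cbv zeta.
  set (M := Mc d1 d2 alpha beta mu).
  assert (ht : 0 < kc2 d1 d2 beta mu).
  { unfold kc2. apply sqrt_lt_R0. apply Rdiv_lt_0_compat; nra. }
  assert (htt : kc2 d1 d2 beta mu * kc2 d1 d2 beta mu = mu * beta / (d1 * d2)).
  { unfold kc2. apply sqrt_sqrt. apply Rlt_le, Rdiv_lt_0_compat; nra. }
  set (t := kc2 d1 d2 beta mu) in *.
  assert (hmu : mu = t*t*d1*d2/beta).
  { rewrite htt. field. split; lra. }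
  assert (hs : sqrt (d1 * d2 * mu * beta) = d1*d2*t).
  { apply sqrt_lem_1.
    assert (0 < d1*d2) by nra. assert (0 < d1*d2*mu) by nra. nra.
    assert (0 < d1*d2) by nra. nra. rewrite hmu. field. lra. }
  rewrite hs.
  assert (hD : alpha * ((mu * d2 + beta * d1 + 2 * (d1 * d2 * t)) / (alpha * uc * (1 - uc))) * t -
     (mu + 4 * t * d1) * (beta + 4 * t * d2) = -9*mu*beta).
  { unfold uc. rewrite hmu. field. split; lra. }
  rewrite hD. unfold uc. assert (hM : M = (beta + t*d2)/alpha) by reflexivity. rewrite hM, hmu. field. repeat split; lra.
Qed.

Lemma basics (d1 d2 alpha beta mu : R) :
  0 < d1 -> 0 < d2 -> 0 < alpha -> 0 < beta -> 0 < mu ->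
  0 < kc2 d1 d2 beta mu /\
  (d2 * kc2 d1 d2 beta mu / beta)^2 = d2 * mu / (beta * d1) /\
  0 < Mc d1 d2 alpha beta mu /\ 0 < Mstar d1 d2 alpha beta mu.
Proof.
  intros h1 h2 ha hb hm.
  assert (ht : 0 < kc2 d1 d2 beta mu).
  { unfold kc2. apply sqrt_lt_R0. apply Rdiv_lt_0_compat; nra. }
  assert (htt : kc2 d1 d2 beta mu * kc2 d1 d2 beta mu = mu * beta / (d1 * d2)).
  { unfold kc2. apply sqrt_sqrt. apply Rlt_le, Rdiv_lt_0_compat; nra. }
  split; [exact ht|]. split.
  { replace ((d2 * kc2 d1 d2 beta mu / beta)^2) with
      (d2*d2*(kc2 d1 d2 beta mu * kc2 d1 d2 beta mu)/(beta*beta)) by (field; lra).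
    rewrite htt. field. repeat split; lra. }
  split; unfold Mc, Mstar.
  - apply Rdiv_lt_0_compat; nra.
  - apply Rdiv_lt_0_compat; nra.
Qed.

Lemma L_eq (d1 d2 alpha beta mu : R) :
  Lfun d1 d2 alpha beta mu = Gfun d1 d2 alpha beta mu *
   (Mstar d1 d2 alpha beta mu / (1 + Mc d1 d2 alpha beta mu * Mstar d1 d2 alpha beta mu)).
Proof. unfold Lfun. cbv zeta. unfold Rdiv. ring. Qed.

Theorem mainTheorem2 (d1 d2 alpha beta : R)
  (hd1 : 0 < d1) (hd2 : 0 < d2) (halpha : 0 < alpha) (hbeta : 0 < beta) :
  (exists mu0 : R, 0 < mu0 /\
     forall mu : R, 0 < mu -> mu < mu0 -> supercritical (Lfun d1 d2 alpha beta mu))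
  /\
  (exists mu1 : R,
     forall mu : R, mu1 < mu -> subcritical (Lfun d1 d2 alpha beta mu)).
Proof.
  split.
  - exists (beta * d1 / (64 * d2)). split.
    { apply Rdiv_lt_0_compat; nra. }
    intros mu hm hlt. unfold supercritical.
    destruct (basics d1 d2 alpha beta mu hd1 hd2 halpha hbeta hm) as [ht [hw [hM hMs]]].
    rewrite L_eq, G_eq by assumption.
    set (w := d2 * kc2 d1 d2 beta mu / beta) in *.
    set (t := kc2 d1 d2 beta mu) in *.
    set (M := Mc d1 d2 alpha beta mu) in *.
    set (Ms := Mstar d1 d2 alpha beta mu) in *.
    assert (hw0 : 0 < w) by (unfold w; apply Rdiv_lt_0_compat; nra).
    assert (hw2 : w^2 < 1/64).
    { rewrite hw. apply (Rmult_lt_reg_r (beta*d1)). nra.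
      unfold Rdiv. rewrite Rmult_assoc, Rinv_l by nra.
      apply (Rmult_lt_reg_r (/ (64 * d2))). apply Rinv_0_lt_compat; lra.
      replace (d2 * mu * 1 * / (64 * d2)) with (mu/64) by (field; lra).
      unfold Rdiv in hlt. nra. }
    assert (hw1 : w < 1/8) by nra.
    assert (hp : 0 < 1 - 20/9*w - 37/9*w^2 - 8/9*w^3) by nra.
    apply Rmult_lt_0_compat.
    + apply Rmult_lt_0_compat; [|exact hp].
      apply Rdiv_lt_0_compat; [|lra].
      assert (0 < M^2) by nra. apply Rmult_lt_0_compat; [apply Rmult_lt_0_compat; [apply Rmult_lt_0_compat|]|]; lra.
    + apply Rdiv_lt_0_compat; nra.
  - exists (beta * d1 / d2).
    intros mu hlt. unfold subcritical.
    assert (hm : 0 < mu).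
    { assert (0 < beta * d1 / d2) by (apply Rdiv_lt_0_compat; nra). lra. }
    destruct (basics d1 d2 alpha beta mu hd1 hd2 halpha hbeta hm) as [ht [hw [hM hMs]]].
    rewrite L_eq, G_eq by assumption.
    set (w := d2 * kc2 d1 d2 beta mu / beta) in *.
    set (t := kc2 d1 d2 beta mu) in *.
    set (M := Mc d1 d2 alpha beta mu) in *.
    set (Ms := Mstar d1 d2 alpha beta mu) in *.
    assert (hw0 : 0 < w) by (unfold w; apply Rdiv_lt_0_compat; nra).
    assert (hw2 : 1 < w^2).
    { rewrite hw. apply (Rmult_lt_reg_r (beta*d1)). nra.
      unfold Rdiv. rewrite Rmult_assoc, Rinv_l by nra.
      apply (Rmult_lt_reg_r (/ d2)). apply Rinv_0_lt_compat; lra.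
      replace (d2 * mu * 1 * / d2) with mu by (field; lra).
      unfold Rdiv in hlt. nra. }
    assert (hw1 : 1 < w) by nra.
    assert (hp : 1 - 20/9*w - 37/9*w^2 - 8/9*w^3 < 0) by nra.
    assert (hK : 0 < M ^ 2 * t * d1 * beta / alpha).
    { apply Rdiv_lt_0_compat; [|lra].
      assert (0 < M^2) by nra. apply Rmult_lt_0_compat; [apply Rmult_lt_0_compat; [apply Rmult_lt_0_compat|]|]; lra. }
    assert (hQ : 0 < Ms / (1 + M * Ms)) by (apply Rdiv_lt_0_compat; nra).
    assert (hneg : M ^ 2 * t * d1 * beta / alpha * (1 - 20/9*w - 37/9*w^2 - 8/9*w^3) < 0).
    { rewrite <- (Rmult_0_r (M ^ 2 * t * d1 * beta / alpha)).
      apply Rmult_lt_compat_l; assumption. }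
    nra.
Qed.
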